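(* Let $\mathcal{A}=(Q,\Sigma,\delta)$ be a synchronizing DFA with $n$ states. If there is a letter $a\in\Sigma$ of rank $r=|Q.a|\le\sqrt[3]{6n-6}$, then $\mathrm{rt}(\mathcal{A})\le(n-1)^2$.
   Context: A DFA $\mathcal{A}=(Q,\Sigma,\delta)$ has finite state set $Q$ with $|Q|=n$, finite alphabet $\Sigma$, total transition function extended to words; $Q.w=\{\delta(q,w)\mid q\in Q\}$. The rank of a word $w$ is $|Q.w|$. A reset word is a word of rank $1$; $\mathcal{A}$ is synchronizing if one exists, and $\mathrm{rt}(\mathcal{A})$ is the length of a shortest reset word. *)

(* Defs.v *)
From mathcomp Require Import all_boot.
Set Implicit Arguments. Unset Strict Implicit. Unset Printing Implicit Defensive.

Definition delta_word (Q S : finType) (delta : Q -> S -> Q) (q : Q) (w : seq S) : Q :=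
  foldl delta q w.

Definition image_word (Q S : finType) (delta : Q -> S -> Q) (w : seq S) : {set Q} :=
  [set delta_word delta q w | q in Q].

Definition rank_word (Q S : finType) (delta : Q -> S -> Q) (w : seq S) : nat :=
  #|image_word delta w|.

Definition reset_word (Q S : finType) (delta : Q -> S -> Q) (w : seq S) : bool :=
  rank_word delta w == 1.

Definition synchronizing (Q S : finType) (delta : Q -> S -> Q) : Prop :=
  exists w, reset_word delta w.

Definition rt (Q S : finType) (delta : Q -> S -> Q) (H : synchronizing delta) : nat :=
  ex_minn (P := fun m => [exists w : m.-tuple S, reset_word delta w])
    (let: ex_intro w Hw := H in
     ex_intro _ (size w) (introT existsP (ex_intro _ (in_tuple w) Hw))).

(* Main.v *)
Require Import Defs.
From mathcomp Require Import all_boot.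
From mathcomp Require Import all_order all_algebra.
From mathcomp Require Import ring zify.
From Stdlib Require Import Classical.
Set Implicit Arguments. Unset Strict Implicit. Unset Printing Implicit Defensive.

Module PKry.
Import GRing.Theory.
Local Open Scope ring_scope.

Section Krylov.
Variables (F : fieldType) (n : nat) (L : finType) (A : L -> 'M[F]_n) (v : 'rV[F]_n).

Fixpoint gv (w : seq L) : 'rV[F]_n := if w is x :: w' then gv w' *m A x else v.

Fixpoint VV (k : nat) : 'M[F]_n :=
  if k is k'.+1 then (<<v>> + \sum_(x : L) (VV k' *m A x))%MS else <<v>>%MS.

Lemma gv_sub w : (gv w <= VV (size w))%MS.
Proof.
elim: w => [|x w IH] /=; first by rewrite genmxE.
apply: submx_trans (addsmxSr _ _).
apply: (sumsmx_sup x) => //. exact: submxMr.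
Qed.

Lemma VV_mono k : (VV k <= VV k.+1)%MS.
Proof.
elim: k => [|k IH] /=; first exact: addsmxSl.
apply: addsmxS => //. apply: sumsmxS => x _. exact: submxMr.
Qed.

Lemma VV_monoT i j : (i <= j)%N -> (VV i <= VV j)%MS.
Proof.
move=> /subnK <-; elim: (j - i)%N => [|d IH]; first by rewrite add0n.
rewrite addSn; exact: submx_trans IH (VV_mono _).
Qed.

Lemma VV_stab i : (VV i.+1 <= VV i)%MS -> forall j, (i <= j)%N -> (VV j <= VV i)%MS.
Proof.
move=> H j /subnK <-; elim: (j - i)%N => [|d IH]; first by rewrite add0n.
rewrite addSn.
have H2 : forall k, (VV k.+1 <= VV k)%MS -> (VV k.+2 <= VV k.+1)%MS.
  move=> k Hk /=. apply: addsmxS => //. apply: sumsmxS => x _. exact: submxMr.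
suff : (VV (d + i).+1 <= VV (d + i))%MS by move=> h; exact: submx_trans h IH.
elim: d {IH} => [|d IHd]; first by rewrite add0n.
rewrite addSn; exact: H2.
Qed.

Lemma VV_rank i : (forall k, (k < i)%N -> ~~ (VV k.+1 <= VV k)%MS) ->
  (\rank (VV 0) + i <= \rank (VV i))%N.
Proof.
elim: i => [|i IH] H; first by rewrite addn0.
have := IH (fun k hk => H k (leq_trans hk (leqnSn _))).
have := mxrank_leqif_sup (VV_mono i).
move=> [h1 h2] h3.
have : (\rank (VV i) < \rank (VV i.+1))%N.
  by rewrite ltn_neqAle h1 h2 H.
rewrite addnS. exact: leq_ltn_trans.
Qed.

Lemma VV_all j : (VV j <= VV n.-1)%MS.
Proof.
have [i [hi Hs]] : exists i, (i <= n.-1)%N /\ (VV i.+1 <= VV i)%MS.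
  case: (boolP [exists k : 'I_n, (VV k.+1 <= VV k)%MS]).
    move/existsP=> [k Hk]; exists k; split => //.
    by rewrite -ltnS; case: n k {Hk} => [|n'] [k hk] //.
  rewrite negb_exists => /forallP Hn.
  case: (eqVneq v 0) => [v0|vn0].
    exists 0%N; split => //=.
    have -> : (<<v>>%MS = 0 :> 'M_n) by rewrite v0 genmx0.
    rewrite addsmx_sub sub0mx /=.
    by apply/sumsmx_subP => x _; rewrite mul0mx sub0mx.
  exfalso.
  have := VV_rank (i := n) (fun k hk => Hn (Ordinal hk)).
  have : (0 < \rank (VV 0))%N.
    by rewrite /= genmxE lt0n mxrank_eq0.
  have := rank_leq_col (VV n). move=> h1 h2 h3.
  have := leq_trans h3 h1. move: (\rank (VV 0)) h2 => rk h2 h5.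
  have : (rk + n <= 0 + n)%N by rewrite add0n.
  by rewrite leq_add2r leqn0 => /eqP h4; rewrite h4 in h2.
case: (leqP j i) => hj.
  apply: submx_trans (VV_monoT hj) (VV_monoT hi).
apply: submx_trans (VV_stab Hs (ltnW hj)) (VV_monoT hi).
Qed.

Lemma VV_ker k (h : 'cV[F]_n) :
  (forall w, (size w <= k)%N -> gv w *m h = 0) -> VV k *m h = 0.
Proof.
elim: k h => [|k IH] h H /=.
  apply/sub_kermxP; rewrite genmxE; apply/sub_kermxP; exact: (H [::]).
apply/sub_kermxP; rewrite addsmx_sub; apply/andP; split.
  rewrite genmxE; apply/sub_kermxP; exact: (H [::]).
apply/sumsmx_subP => x _; apply/sub_kermxP; rewrite -mulmxA.
apply: IH => w hw; rewrite mulmxA.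
exact: (H (x :: w)).
Qed.

Lemma krylov (h : 'cV[F]_n) :
  (forall w, (size w <= n.-1)%N -> gv w *m h = 0) -> forall w, gv w *m h = 0.
Proof.
move=> H w.
have := submx_trans (gv_sub w) (VV_all (size w)).
case/submxP => D ->; by rewrite -mulmxA (VV_ker H) mulmx0.
Qed.

End Krylov.

End PKry.
Import PKry.

Module PBol.
Import GRing.Theory Num.Theory.
Local Open Scope ring_scope.

Definition idxB (b : nat) : seq (nat * nat) :=
  [seq (j, (i - j)%N) | i <- iota 0 b.+1, j <- iota 0 i.+1].

Lemma size_idxB b : size (idxB b) = 'C(b.+2, 2).
Proof.
rewrite /idxB size_allpairs_dep.
elim: b => [|b IH] //.
rewrite -[b.+2]addn1 iotaD map_cat sumn_cat IH /= size_iota addn0 addn1.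
by rewrite [RHS]binS bin1.
Qed.

Lemma mem_idxB b i j : (i + j <= b)%N -> (i, j) \in idxB b.
Proof.
move=> h; apply/allpairsPdep; exists (i + j)%N, i; split.
- by rewrite mem_iota add0n ltnS.
- by rewrite mem_iota add0n ltnS leq_addr.
- by rewrite addKn.
Qed.

Section Bollobas.
Variables (T : finType) (m b : nat) (X Y : 'I_m -> {set T}).
Hypotheses (hX : forall i, #|X i| = 2) (hY : forall i, (#|Y i| <= b)%N)
  (hd : forall i, [disjoint X i & Y i])
  (hs : forall i j : 'I_m, (i < j)%N -> ~~ [disjoint X j & Y i]).

Let io (x : T) : rat := (enum_rank x : nat)%:R.
Let ss j := \sum_(x in X j) io x.
Let pp j := \prod_(x in X j) io x.

Lemma io_inj x y : io x = io y -> x = y.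
Proof. by move/eqP; rewrite /io eqr_nat => /eqP/val_inj/enum_rank_inj. Qed.

Lemma pair_prod j y : \prod_(x in X j) (io x - y) = y ^+ 2 - y * ss j + pp j.
Proof.
rewrite /ss /pp; move: (hX j) => /eqP /cards2P [x1 [x2 [hne ->]]].
rewrite !big_setU1 ?in_set1 // !big_set1 /=; ring.
Qed.

Let M : 'M[rat]_m :=
  \matrix_(i, j) \prod_(y in Y i) \prod_(x in X j) (io x - io y).

Let N := size (idxB b).
Let E : 'M[rat]_(N, m) :=
  \matrix_(k, j) (ss j ^+ (nth (0,0)%N (idxB b) k).1 * pp j ^+ (nth (0,0)%N (idxB b) k).2).

Let R a1 a2 (ys : seq T) : 'rV[rat]_m := \row_j (ss j ^+ a1 * pp j ^+ a2 *
     \prod_(y <- ys) (io y ^+ 2 - io y * ss j + pp j)).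

Lemma claim (ys : seq T) (a1 a2 : nat) : (a1 + a2 + size ys <= b)%N ->
  (R a1 a2 ys <= E)%MS.
Proof.
elim: ys a1 a2 => [|y ys IH] a1 a2 /= h.
  rewrite addn0 in h.
  have hm := mem_idxB h.
  have hk : (index (a1, a2) (idxB b) < N)%N by rewrite index_mem.
  have -> : R a1 a2 [::] = row (Ordinal hk) E.
    by apply/rowP => j; rewrite !mxE big_nil mulr1 /= nth_index.
  exact: row_sub.
have -> : R a1 a2 (y :: ys) = (io y ^+ 2) *: R a1 a2 ys + (- io y) *: R a1.+1 a2 ys
     + R a1 a2.+1 ys.
  apply/rowP => j; rewrite !mxE big_cons !exprS expr0.
  set P := \prod_(_ <- ys) _; move: P (ss j) (pp j) (io y) => P s p z; ring.
rewrite addnS in h.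
apply: addmx_sub; first apply: addmx_sub; apply: scalemx_sub || idtac; apply: IH.
- exact: ltnW.
- by rewrite addSn.
- by rewrite addnS.
Qed.

Lemma bollobas : (m <= 'C(b.+2, 2))%N.
Proof.
have hME : (M <= E)%MS.
  apply/row_subP => i.
  have -> : row i M = R 0 0 (enum (Y i)).
    apply/rowP => j; rewrite !mxE expr0 !mul1r big_enum /=.
    by apply: eq_bigr => y _; rewrite pair_prod.
  by apply: claim; rewrite !add0n -cardE.
have hdet : \det M != 0.
  rewrite det_trig; last first.
    apply/is_trig_mxP => i j hij; rewrite mxE.
    have := hs hij; rewrite -setI_eq0 => /set0Pn [x].
    rewrite inE => /andP [hx hy].
    apply/eqP/prodf_eq0; exists x => //; apply/prodf_eq0; exists x => //.
    by rewrite subrr.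
  apply/prodf_neq0 => i _; rewrite mxE; apply/prodf_neq0 => y hy.
  apply/prodf_neq0 => x hx; rewrite subr_eq0; apply/eqP => /io_inj exy.
  have := hd i; rewrite disjoint_subset => /subsetP /(_ x hx).
  by rewrite inE exy hy.
have hu : M \in unitmx by rewrite unitmxE unitfE.
have := mxrankS hME; rewrite mxrank_unit // => h.
by rewrite -size_idxB; apply: leq_trans h (rank_leq_row _).
Qed.
End Bollobas.

End PBol.
Import PBol.

Module PPin.

Lemma ex_min_size (L : Type) (P : seq L -> Prop) :
  (exists w, P w) -> exists w, P w /\ (forall w', P w' -> size w <= size w').
Proof.
move=> [w hw].
suff H : forall n w, size w <= n -> P w ->
  exists w, P w /\ (forall w', P w' -> size w <= size w') by exact: H _ w (leqnn _) hw.
elim => [|n IH] w0 hs hw0.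
  exists w0; split => // w' _; by move: hs; rewrite leqn0 => /eqP ->.
case: (classic (exists w', P w' /\ size w' < size w0)) => [[w' [hw' hlt]]|hno].
  apply: (IH w') => //; rewrite -ltnS; exact: leq_trans hlt hs.
exists w0; split => // w' hw'; rewrite leqNgt; apply/negP => hlt.
by apply: hno; exists w'.
Qed.

Lemma imset_lt (T1 T2 : finType) (f : T1 -> T2) (A : {set T1}) x y :
  x \in A -> y \in A -> x != y -> f x = f y -> #|f @: A| < #|A|.
Proof.
move=> hx hy hxy hf.
have -> : f @: A = f @: (A :\ y).
  apply/setP => z; apply/imsetP/imsetP => [[u hu ->]|[u hu ->]].
    case: (eqVneq u y) => [->|huy]; first by exists x; rewrite // !inE hxy.
    by exists u; rewrite // !inE huy.
  by exists u => //; move: hu; rewrite !inE => /andP[].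
apply: (leq_ltn_trans (leq_imset_card _ _)).
by rewrite (cardsD1 y A) hy add1n ltnS.
Qed.

Lemma imset_nlt (T1 T2 : finType) (f : T1 -> T2) (A : {set T1}) :
  #|f @: A| < #|A| -> exists x y, [/\ x \in A, y \in A, x != y & f x = f y].
Proof.
move=> h; apply: NNPP => hn; move: h; rewrite card_in_imset ?ltnn //.
move=> x y hx hy hf; apply: NNPP => hxy; apply: hn; exists x, y; split => //.
exact/eqP.
Qed.

Lemma arith1 (a c kk : nat) : a < c -> c <= kk -> a + (kk.+1 - c) < kk.+1.
Proof. lia. Qed.

Section Pin.
Variables (Q : finType) (L : Type) (act : L -> Q -> Q) (ok : pred L) (U : {set Q}).
Hypothesis closedU : forall l s, act l s \in U.

Definition actw (w : seq L) s := foldl (fun s l => act l s) s w.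
Definition img (T : {set Q}) w := [set actw w s | s in T].

Lemma actw_cat w1 w2 s : actw (w1 ++ w2) s = actw w2 (actw w1 s).
Proof. by rewrite /actw foldl_cat. Qed.

Lemma img_cat (T : {set Q}) w1 w2 : img T (w1 ++ w2) = img (img T w1) w2.
Proof.
rewrite /img -imset_comp; apply: eq_imset => s /=; exact: actw_cat.
Qed.

Lemma img_nil (T : {set Q}) : img T [::] = T.
Proof. by rewrite /img /actw /= imset_id. Qed.

Lemma card_img (T : {set Q}) w : #|img T w| <= #|T|.
Proof. exact: leq_imset_card. Qed.

Lemma actw_U w s : s \in U -> actw w s \in U.
Proof. elim: w s => [|l w IH] s //= hs; exact: IH. Qed.

Lemma img_U (T : {set Q}) w : T \subset U -> img T w \subset U.
Proof.
move=> /subsetP h; apply/subsetP => x /imsetP [s hs ->]; exact: actw_U (h _ hs).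
Qed.

Lemma all_take_ok w i : all ok w -> all ok (take i w).
Proof. by rewrite -{1}(cat_take_drop i w) all_cat => /andP[]. Qed.
Lemma all_drop_ok w i : all ok w -> all ok (drop i w).
Proof. by rewrite -{1}(cat_take_drop i w) all_cat => /andP[]. Qed.

Lemma pin (T : {set Q}) : T \subset U -> 1 < #|T| ->
  (exists w, all ok w /\ #|img T w| < #|T|) ->
  exists w, [/\ all ok w, #|img T w| < #|T| & size w <= 'C(#|U| - #|T| + 2, 2)].
Proof.
move=> hTU h2 /ex_min_size [w [[hok hlt] hmin]].
have minc : forall w', all ok w' -> size w' < size w -> #|img T w'| = #|T|.
  move=> w' hw' hs; apply/eqP; rewrite eqn_leq card_img leqNgt; apply/negP => hl.
  by have := hmin w' (conj hw' hl); rewrite leqNgt hs.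
exists w; split => //.
case/lastP: w hok hlt hmin minc => [|w' l] hok hlt hmin minc.
  by rewrite img_nil ltnn in hlt.
rewrite size_rcons; set k := size w'.
have hok' : all ok w' by move: hok; rewrite all_rcons => /andP[].
set A := img T w'.
have hA : #|A| = #|T| by apply: minc; rewrite // size_rcons.
have himg : img T (rcons w' l) = [set act l s | s in A].
  by rewrite -cats1 img_cat /img -imset_comp.
have [p [q [hp hq hpq hl]]] : exists p q, [/\ p \in A, q \in A, p != q & act l p = act l q].
  apply: imset_nlt; by rewrite -himg hA.
pose Ai (i : 'I_k.+1) := img T (take i w').
pose Bi (i : 'I_k.+1) := [set s in U | actw (drop i w') s \in [set p; q]].
have hAi : forall i, #|Ai i| = #|T|.
  move=> i; apply: minc; first exact: all_take_ok.
  rewrite size_rcons ltnS size_take_min; exact: geq_minr.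
have hAU : forall i, Ai i \subset U by move=> i; exact: img_U.
have hBU : forall i, Bi i \subset U by move=> i; apply/subsetP => x; rewrite inE => /andP[].
have hAB2 : forall i, 1 < #|Ai i :&: Bi i|.
  move=> i.
  have hAA : A = img (Ai i) (drop i w') by rewrite /Ai -img_cat cat_take_drop.
  move: hp hq; rewrite hAA => /imsetP [sp hsp hpe] /imsetP [sq hsq hqe].
  apply/card_gt1P; exists sp, sq; split.
  - by rewrite inE hsp inE (subsetP (hAU i)) //= !inE -hpe eqxx.
  - by rewrite inE hsq inE (subsetP (hAU i)) //= !inE -hqe eqxx orbT.
  - by apply: contraNneq hpq => e; rewrite hpe hqe e.
have hAB1 : forall i j : 'I_k.+1, i < j -> #|Ai i :&: Bi j| <= 1.
  move=> i j hij; rewrite leqNgt; apply/negP => /card_gt1P [s [s' [hs hs' hss']]].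
  move: hs hs'; rewrite !inE => /andP [hsA /andP [_ hsB]] /andP [hsA' /andP [_ hsB']].
  have hj : j <= k by rewrite -ltnS.
  pose w2 := take i w' ++ drop j (rcons w' l).
  have hw2ok : all ok w2 by rewrite all_cat all_take_ok // all_drop_ok.
  have hw2s : size w2 < size (rcons w' l).
    rewrite size_cat size_take_min size_drop !size_rcons.
    rewrite (minn_idPl (leq_trans (ltnW hij) hj)) -/k.
    exact: arith1.
  have := minc w2 hw2ok hw2s.
  rewrite img_cat -/(Ai i) drop_rcons // => heq.
  have key : forall t, (t == p) || (t == q) -> act l t = act l p.
    by move=> t /orP [] /eqP ->.
  have := imset_lt (f := fun s => actw (rcons (drop j w') l) s) hsA hsA' hss'.
  rewrite /= -!cats1 !actw_cat /= (key _ hsB) (key _ hsB') => /(_ erefl).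
  by rewrite cats1; move: heq; rewrite /img => ->; rewrite hAi ltnn.
pose PX (i : 'I_k.+1) (X : {set Q}) := (X \subset Ai i :&: Bi i) && (#|X| == 2).
have hX : forall i, exists X, PX i X.
  move=> i; have /card_gt1P [x [y [hx hy hxy]]] := hAB2 i.
  exists [set x; y]; rewrite /PX cards2 hxy eqxx andbT.
  by apply/subsetP => z /set2P [] ->.
pose Xf (i : 'I_k.+1) := odflt set0 [pick X | PX i X].
have hXf : forall i, PX i (Xf i).
  move=> i; rewrite /Xf; case: pickP => [X //|h].
  by have [X hX'] := hX i; rewrite h in hX'.
pose Yf (i : 'I_k.+1) := U :\: Ai i.
have := @bollobas Q k.+1 (#|U| - #|T|) Xf Yf.
rewrite addn2; apply.
- by move=> i; have /andP [_ /eqP] := hXf i.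
- move=> i; rewrite /Yf cardsD (setIidPr (hAU i)) hAi //.
- move=> i; rewrite disjoint_subset; apply/subsetP => x hx.
  have /andP [/subsetP hs _] := hXf i.
  by move: (hs x hx); rewrite !inE => /andP [-> _].
- move=> i j hij; apply/negP => hdis.
  have /andP [/subsetP hs /eqP hc] := hXf j.
  have : Xf j \subset Ai i :&: Bi j.
    apply/subsetP => x hx; move: (hs x hx); rewrite !inE => /andP [hxA hxB].
    rewrite hxB andbT.
    move: hdis; rewrite disjoint_subset => /subsetP /(_ x hx).
    have hxU : x \in U by exact: (subsetP (hAU j)).
    by rewrite !inE hxU andbT negbK.
  move/subset_leq_card; rewrite hc => h; have := leq_trans h (hAB1 _ _ hij).
  by [].
Qed.
End Pin.

End PPin.
Import PPin.

Module PAr.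

Definition G (r k : nat) := \sum_(1 <= i < k) 'C(r.+1 - i, 2).

Lemma G_step r k : 1 <= k -> G r k.+1 = G r k + 'C(r.+1 - k, 2).
Proof. by move=> hk; rewrite /G big_nat_recr. Qed.

Lemma G_le1 r k : k <= 1 -> G r k = 0.
Proof. by move=> hk; rewrite /G big_geq. Qed.

Lemma G_mono r a b : a <= b -> G r a <= G r b.
Proof.
move=> /subnK <-; elim: (b - a) => [|d IH]; first by rewrite add0n.
apply: leq_trans IH _; rewrite addSn.
case: (leqP (d + a) 0) => h.
  by rewrite (G_le1 r (leq_trans h (leq0n 1))) (G_le1 (k := (d + a).+1) r) // ltnS.
by rewrite G_step // leq_addr.
Qed.

Lemma sumC2 r : 1 <= r -> \sum_(1 <= i < r) 'C(i.+1, 2) = 'C(r.+1, 3).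
Proof.
elim: r => [|r IH] // _.
case: r IH => [|r] IH; first by rewrite big_geq.
by rewrite big_nat_recr //= IH // [RHS]binS.
Qed.

Lemma G_rr r : 1 <= r -> G r r = 'C(r.+1, 3).
Proof.
move=> hr; rewrite /G big_nat_rev -(sumC2 hr).
apply: eq_big_nat => i /andP [h1 h2]; congr 'C(_, 2).
have hh : forall i r : nat, 1 <= i < r -> r.+1 - (1 + r - i.+1) = i.+1 by move=> *; lia.
by apply: hh; rewrite h1 h2.
Qed.

Lemma C2_eq r : 2 * 'C(r.+1, 2) = r.+1 * r.
Proof.
elim: r => [|r IH] //.
rewrite binS bin1 mulnDr IH; lia.
Qed.

Lemma C3_eq r : 6 * 'C(r.+1, 3) + r = r * r * r.
Proof.
elim: r => [|r IH] //.
rewrite binS mulnDr.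
have := C2_eq r; nia.
Qed.

Lemma final_arith n r g : 1 <= r -> r ^ 3 <= 6 * n - 6 -> g = 'C(r.+1, 3) ->
  1 + n * g <= (n - 1) ^ 2.
Proof.
move=> hr h ->; have := C3_eq r; rewrite !expnS expn0 !muln1 in h *.
move: ('C(r.+1, 3)) => c hc.
have hn : c <= n - 2 by nia.
nia.
Qed.

End PAr.
Import PAr.

Module PM1.
Import GRing.Theory Num.Theory.

Section Full.
Variables (Q S : finType) (delta : Q -> S -> Q).
Local Notation dw := (delta_word delta).

Lemma dw_cat q u v : dw q (u ++ v) = dw (dw q u) v.
Proof. by rewrite /delta_word foldl_cat. Qed.

Lemma image_cat W u :
  image_word delta (W ++ u) = [set dw q u | q in image_word delta W].
Proof.
rewrite /image_word -imset_comp; apply: eq_imset => q /=; exact: dw_cat.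
Qed.

Lemma reset_const (Hs : synchronizing delta) : exists z t0, forall q, dw q z = t0.
Proof.
case: Hs => z; rewrite /reset_word /rank_word => /cards1P [t0 h].
exists z, t0 => q; have : dw q z \in image_word delta z by apply: imset_f.
by rewrite h inE => /eqP.
Qed.

Local Open Scope ring_scope.

Lemma compress_full (Hs : synchronizing delta) (W : seq S) :
  (1 < #|image_word delta W|)%N ->
  exists u, (size u <= #|Q|.-1)%N /\
    (#|image_word delta (W ++ u ++ W)| < #|image_word delta W|)%N.
Proof.
set T := image_word delta W; set k := #|T| => hk.
have [t htT] : exists t, t \in T by apply/card_gt0P; exact: ltnW.
have [z [t0 hz]] := reset_const Hs.
apply: NNPP => Hn.
have cnt : forall u, (size u <= #|Q|.-1)%N ->
    #|[set s in T | dw s (u ++ W) == t]| = 1%N.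
  move=> u hu.
  have hge : (k <= #|image_word delta (W ++ u ++ W)|)%N.
    by rewrite leqNgt; apply/negP => hl; apply: Hn; exists u.
  have himg : image_word delta (W ++ u ++ W) = [set dw s (u ++ W) | s in T].
    by rewrite image_cat.
  have hsub : [set dw s (u ++ W) | s in T] \subset T.
    apply/subsetP => x /imsetP [s _ ->]; rewrite dw_cat; exact: imset_f.
  have heq : [set dw s (u ++ W) | s in T] = T.
    apply/eqP; rewrite eqEcard hsub /=; by rewrite -himg.
  have hinj : {in T &, injective (fun s => dw s (u ++ W))}.
    apply/imset_injP; by rewrite heq.
  have : t \in [set dw s (u ++ W) | s in T] by rewrite heq.
  move/imsetP => [s0 hs0 ht].
  apply/eqP/cards1P; exists s0; apply/setP => s; rewrite !inE.
  apply/andP/eqP => [[hs /eqP hst]|->]; last by rewrite hs0 ht eqxx.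
  by apply: hinj => //; rewrite hst ht.
pose n := #|Q|.
pose g (u : seq S) : 'rV[rat]_n :=
  \row_i ((dw (enum_val i) (u ++ W) == t)%:R - (k%:R)^-1).
pose A (x : S) : 'M[rat]_n := \matrix_(i, j) ((enum_val i == delta (enum_val j) x)%:R).
pose h : 'cV[rat]_n := \col_i ((enum_val i \in T)%:R).
have gS : forall x u, g (x :: u) = g u *m A x.
  move=> x u; apply/rowP => j; rewrite !mxE.
  rewrite (bigD1 (enum_rank (delta (enum_val j) x))) //= big1 ?addr0.
    by rewrite !mxE enum_rankK eqxx mulr1.
  move=> i hi; rewrite !mxE; case: (eqVneq (enum_val i) (delta (enum_val j) x)) => [e|ne]; last by rewrite mulr0.
  by move: hi; rewrite -e enum_valK eqxx.
have gv_eq : forall u, g u = gv A (g [::]) u.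
  by elim => [|x u IH] //=; rewrite gS IH.
have gh : forall u, (g u *m h) 0 0 = #|[set s in T | dw s (u ++ W) == t]|%:R - 1.
  move=> u; rewrite !mxE.
  under eq_bigr => i _ do rewrite !mxE.
  rewrite -(big_enum_val (fun q => ((dw q (u ++ W) == t)%:R - (k%:R)^-1) * (q \in T)%:R)).
  rewrite (bigID (fun q => q \in T)) /= [X in _ + X]big1 ?addr0; last first.
    by move=> q /negbTE ->; rewrite mulr0.
  under eq_bigr => q hq do rewrite hq mulr1.
  rewrite sumrB sumr_const -/k.
  have hk0 : (k%:R : rat) != 0 by rewrite pnatr_eq0 -lt0n; exact: ltnW.
  rewrite -[_ *+ k]mulr_natr mulVf // -natr_sum.
  congr (_%:R - _).
  rewrite -sum1dep_card big_mkcond [RHS]big_mkcond /=.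
  by apply: eq_bigr => q _; case: (q \in T); case: eqP.
have hall : forall w, gv A (g [::]) w *m h = 0.
  apply: krylov => w hw; rewrite -gv_eq; apply/matrixP => i j.
  by rewrite !ord1 gh cnt // subrr mxE.
have := hall z; rewrite -gv_eq => /matrixP /(_ 0 0); rewrite gh mxE.
have -> : [set s in T | dw s (z ++ W) == t] =
    if dw t0 W == t then T else set0.
  apply/setP => s; rewrite !inE dw_cat hz.
  by case: ifP => ht; rewrite ?inE ?andbT ?andbF.
case: eqP => _.
  by move/eqP; rewrite subr_eq0 -/k pnatr_eq1 => /eqP ek; rewrite ek ltnn in hk.
by rewrite cards0 sub0r => /eqP; rewrite oppr_eq0 oner_eq0.
Qed.
End Full.

End PM1.
Import PM1.

Module PM2.

Section Main.
Variables (Q S : finType) (delta : Q -> S -> Q) (Hs : synchronizing delta) (a : S).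
Local Notation dw := (delta_word delta).
Let n := #|Q|.
Let U := image_word delta [:: a].
Let r := #|U|.
Let act (u : seq S) (s : Q) := dw s (rcons u a).
Let ok (u : seq S) := size u <= n.-1.
Let realw (om : seq (seq S)) := flatten [seq rcons u a | u <- om].

Lemma closedU u s : act u s \in U.
Proof.
rewrite /act -cats1 dw_cat; apply/imsetP; by exists (dw s u).
Qed.

Lemma realw_cat o1 o2 : realw (o1 ++ o2) = realw o1 ++ realw o2.
Proof. by rewrite /realw map_cat flatten_cat. Qed.

Lemma actw_real om s : actw act om s = dw s (realw om).
Proof.
elim: om s => [|u om IH] s //=.
by rewrite IH /realw /= dw_cat.
Qed.

Lemma image_real om : image_word delta (a :: realw om) = img act U om.
Proof.
rewrite -cat1s image_cat /img; apply: eq_imset => q; by rewrite actw_real.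
Qed.

Lemma dsync : exists om, all ok om /\ #|img act U om| <= 1.
Proof.
suff H : forall c om, all ok om -> #|img act U om| <= c ->
    exists om, all ok om /\ #|img act U om| <= 1.
  by apply: (H #|Q| [::]) => //; rewrite img_nil subset_leq_card ?subset_predT.
elim => [|c IH] om hok hc; first by exists om; split => //; exact: leq_trans hc (leq0n 1).
case: (leqP #|img act U om| 1) => h1; first by exists om.
have := compress_full Hs (W := a :: realw om); rewrite image_real => /(_ h1).
case=> u [hu hlt].
apply: (IH (om ++ u :: om)).
  by rewrite all_cat hok /= hok andbT /ok.
rewrite -image_real realw_cat.
have -> : realw (u :: om) = rcons u a ++ realw om by [].
rewrite cat_rcons -ltnS; exact: leq_trans hlt hc.
Qed.

Lemma loop c (T : {set Q}) : T \subset U -> #|T| <= c ->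
  exists om, [/\ all ok om, #|img act T om| <= 1 & size om <= G r #|T|].
Proof.
elim: c T => [|c IH] T hTU hc.
  by exists [::]; rewrite img_nil; split => //; exact: leq_trans hc _.
case: (leqP #|T| 1) => h1; first by exists [::]; rewrite img_nil.
have hex : exists w, all ok w /\ #|img act T w| < #|T|.
  have [om [hok h]] := dsync; exists om; split => //.
  apply: leq_ltn_trans h1; apply: leq_trans h; apply: subset_leq_card.
  exact: imsetS.
have [w1 [hok1 hlt1 hs1]] := pin closedU hTU h1 hex.
have hT1U : img act T w1 \subset U by exact: (img_U closedU).
have [w2 [hok2 h2 hs2]] := IH _ hT1U (leq_trans hlt1 hc).
exists (w1 ++ w2); split.
- by rewrite all_cat hok1.
- by rewrite img_cat.
rewrite size_cat.
have hTr : #|T| <= r by exact: subset_leq_card.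
have e : #|T| = (#|T|.-1).+1 by rewrite prednK // ltnW.
rewrite [in X in _ <= X]e G_step -?e; last by rewrite -ltnS -e.
rewrite addnC leq_add //.
  apply: leq_trans hs2 _; apply: G_mono; by rewrite -ltnS -e.
move: hs1; have -> // : #|U| - #|T| + 2 = r.+1 - #|T|.-1.
move: hTr h1; rewrite /r; move: #|T| #|U| => x y; clear; lia.
Qed.

Lemma size_realw om : all ok om -> 0 < n -> size (realw om) <= n * size om.
Proof.
move=> hok hn; elim: om hok => [|u om IH] //= /andP [hu hok].
rewrite size_cat size_rcons mulnS leq_add ?IH //.
by rewrite -(prednK hn) ltnS.
Qed.

Lemma main_bound : exists w, reset_word delta w /\ size w <= 1 + n * G r r.
Proof.
have [z [t0 hz]] := reset_const Hs.
have hn : 0 < n by apply/card_gt0P; exists t0.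
have hr : 0 < r by apply/card_gt0P; exists (delta t0 a); apply/imsetP; exists t0.
have [om [hok h1 hs]] := loop (c := r) (subxx U) (leqnn _).
exists (a :: realw om); split.
  rewrite /reset_word /rank_word image_real eqn_leq h1 /=.
  apply/card_gt0P; exists (actw act om (delta t0 a)); apply/imsetP.
  by exists (delta t0 a) => //; apply/imsetP; exists t0.
rewrite /= add1n ltnS; apply: leq_trans (size_realw hok hn) _.
by rewrite leq_mul2l hs orbT.
Qed.

Lemma main_final : r ^ 3 <= 6 * n - 6 -> rt Hs <= (n - 1) ^ 2.
Proof.
move=> h.
have [w [hw hs]] := main_bound.
have [z [t0 hz]] := reset_const Hs.
have hr : 0 < r by apply/card_gt0P; exists (delta t0 a); apply/imsetP; exists t0.
rewrite /rt; case: ex_minnP => m _ Hmin.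
apply: leq_trans (Hmin (size w) _) _.
  by apply/existsP; exists (in_tuple w).
apply: leq_trans hs _.
exact: (final_arith hr h (G_rr hr)).
Qed.

End Main.


End PM2.
Import PM2.

Theorem corollary1 (Q S : finType) (delta : Q -> S -> Q)
  (Hsync : synchronizing delta) (a : S) :
  (rank_word delta [:: a]) ^ 3 <= 6 * #|Q| - 6 ->
  rt Hsync <= (#|Q| - 1) ^ 2.
Proof. exact: main_final. Qed.
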